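(* Let $k>8$ be an integer, let $\theta=2\pi/k$, and let $\lambda>0$ be a real number such that $\cos\theta-\sin\theta>\frac{1}{\lambda+1}$. Let $G=(V,E)$ be a $\lambda$-civilized unit disk graph, and let $YY_k$ be the Yao-Yao graph of $G$ (defined in the context). Then for every real $t\ge \frac{\lambda}{(\lambda+1)(\cos\theta-\sin\theta)-1}$, the graph $YY_k$ is a length $t$-spanner of $G$.
   Context: Unit disk graph (UDG): $V$ is a finite set of points in the Euclidean plane and $E=\{uv: u,v\in V,\ u\neq v,\ |uv|\le 1\}$, where $|uv|$ is Euclidean distance; $G$ is assumed connected. $G$ is $\lambda$-civilized if no two nodes of $V$ are at distance smaller than $\lambda$. A subgraph $H$ of $G$ on the same vertex set is a length $t$-spanner of $G$ if for all $u,v\in V$ the length (sum of Euclidean edge lengths) of a shortest $uv$-path in $H$ is at most $t$ times the length of a shortest $uv$-path in $G$. Cones: for each point $u$, the plane is partitioned into $k$ cones with apex $u$, each of angle $\theta=2\pi/k$, bounded by $k$ equally spaced rays from $u$ (the same ray directions at every node); each cone is half-open, half-closed. $K_u(v)$ denotes the cone with apex $u$ containing $v$. An edge $uw$ incident to $u$ lies in a cone $K_u$ if $w\in K_u$. Identifiers: each node has a distinct identifier $\mathrm{ID}(u)$. For a directed edge $\overrightarrow{uv}$, $\mathrm{ID}(\overrightarrow{uv})=(|uv|,\mathrm{ID}(u),\mathrm{ID}(v))$, compared lexicographically; for an undirected edge, $\mathrm{ID}(uv)=\min\{\mathrm{ID}(\overrightarrow{uv}),\mathrm{ID}(\overrightarrow{vu})\}$.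 Yao step: $E_Y=\emptyset$; for each node $u$ and each cone $K_u$ such that some edge of $E$ incident to $u$ lies in $K_u$, pick the edge $uv$ of $E$ lying in $K_u$ with lowest $\mathrm{ID}(uv)$ and add the directed edge $\overrightarrow{uv}$ to $E_Y$. The Yao graph is $Y_k=(V,E_Y)$. Reverse Yao step: start with $E_{YY}=E_Y$; for each node $v$ and each cone $K_v$, among all edges $\overrightarrow{uv}\in E_Y$ with sink $v$ and $u\in K_v$, delete all from $E_{YY}$ except the one with smallest ID. The Yao-Yao graph $YY_k=(V,E_{YY})$ is viewed as an undirected graph. *)

(* Defs.v *)
From Stdlib Require Import Reals Lra List.
Open Scope R_scope.

Definition point : Type := (R * R)%type.

Definition dist (p q : point) : R :=
  sqrt ((fst p - fst q) ^ 2 + (snd p - snd q) ^ 2).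

Definition udg_edge (pts : list point) (u v : point) : Prop :=
  In u pts /\ In v pts /\ u <> v /\ dist u v <= 1.

Inductive walk (E : point -> point -> Prop) : point -> point -> R -> Prop :=
| walk_nil : forall u, walk E u u 0
| walk_cons : forall u w v L, E u w -> walk E w v L -> walk E u v (dist u w + L).

Definition connected (pts : list point) : Prop :=
  forall u v, In u pts -> In v pts -> exists L, walk (udg_edge pts) u v L.

Definition civilized (lam : R) (pts : list point) : Prop :=
  forall u v, In u pts -> In v pts -> u <> v -> lam <= dist u v.

(** H is a length t-spanner of G (both on vertex set pts): for all u, v the
    shortest uv-path in H has length at most t times the shortest in G;
    stated as: every G-walk of length L from u to v is matched by an H-walk
    of length at most t*L. *)
Definition length_spanner (pts : list point) (G H : point -> point -> Prop) (t : R) : Prop :=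
  forall u v, In u pts -> In v pts ->
    forall L, walk G u v L -> exists L', walk H u v L' /\ L' <= t * L.

Definition theta (k : nat) : R := 2 * PI / INR k.

Definition in_cone (k : nat) (alpha : R) (i : nat) (u w : point) : Prop :=
  exists r phi, 0 < r /\
    alpha + INR i * theta k <= phi < alpha + INR (S i) * theta k /\
    fst w - fst u = r * cos phi /\ snd w - snd u = r * sin phi.

Definition same_cone (k : nat) (alpha : R) (u v w : point) : Prop :=
  exists i, (i < k)%nat /\ in_cone k alpha i u v /\ in_cone k alpha i u w.

Definition eid : Type := (R * nat * nat)%type.

Definition lex_lt (a b : eid) : Prop :=
  let '(d1, i1, j1) := a in let '(d2, i2, j2) := b in
  d1 < d2 \/ (d1 = d2 /\ (i1 < i2)%nat) \/ (d1 = d2 /\ i1 = i2 /\ (j1 < j2)%nat).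

Definition lex_ltb (a b : eid) : bool :=
  let '(d1, i1, j1) := a in let '(d2, i2, j2) := b in
  if Rlt_dec d1 d2 then true
  else if Req_EM_T d1 d2 then
    (Nat.ltb i1 i2 || (Nat.eqb i1 i2 && Nat.ltb j1 j2))%bool
  else false.

Definition lex_le (a b : eid) : Prop := a = b \/ lex_lt a b.

Definition lex_min (a b : eid) : eid := if lex_ltb a b then a else b.

Definition did (ID : point -> nat) (u v : point) : eid := (dist u v, ID u, ID v).
Definition uid (ID : point -> nat) (u v : point) : eid := lex_min (did ID u v) (did ID v u).

Definition yao_edge (pts : list point) (k : nat) (alpha : R) (ID : point -> nat)
  (u v : point) : Prop :=
  udg_edge pts u v /\
  forall w, udg_edge pts u w -> same_cone k alpha u v w -> lex_le (uid ID u v) (uid ID u w).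

Definition yy_dedge (pts : list point) (k : nat) (alpha : R) (ID : point -> nat)
  (u v : point) : Prop :=
  yao_edge pts k alpha ID u v /\
  forall u', yao_edge pts k alpha ID u' v -> same_cone k alpha v u u' ->
    lex_le (uid ID u v) (uid ID u' v).

Definition yy_edge (pts : list point) (k : nat) (alpha : R) (ID : point -> nat)
  (u v : point) : Prop :=
  yy_dedge pts k alpha ID u v \/ yy_dedge pts k alpha ID v u.

(* Main.v *)
Require Import Defs.
From Stdlib Require Import Reals Lra Lia List Classical.
Open Scope R_scope.
Local Notation dist := Defs.dist.

Lemma dist_sym p q : dist p q = dist q p.
Proof. unfold dist. f_equal. ring. Qed.

Lemma dist_nonneg p q : 0 <= dist p q.
Proof. unfold dist. apply sqrt_pos. Qed.

Lemma dist_self p : dist p p = 0.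
Proof. unfold dist. replace ((fst p - fst p) ^ 2 + (snd p - snd p) ^ 2) with 0 by ring. apply sqrt_0. Qed.

Lemma dist_pos p q : p <> q -> 0 < dist p q.
Proof.
  intros H. destruct p as [a b], q as [c d]. unfold dist; simpl.
  apply sqrt_lt_R0.
  destruct (Req_dec a c) as [->|Hac].
  - destruct (Req_dec b d) as [->|Hbd]; [congruence|].
    assert (0 < (b-d)^2). { assert (b - d <> 0) by lra. simpl. rewrite Rmult_1_r.
      destruct (Rlt_dec 0 (b-d)); nra. }
    assert (0 <= (c-c)^2) by apply pow2_ge_0. lra.
  - assert (0 < (a-c)^2). { assert (a - c <> 0) by lra. simpl. rewrite Rmult_1_r. 
      destruct (Rlt_dec 0 (a-c)); nra. }
    assert (0 <= (b-d)^2) by apply pow2_ge_0. lra.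
Qed.

Lemma find_slot (p : R) : 0 < p -> forall n x, 0 <= x < INR n * p ->
  exists i, (i < n)%nat /\ INR i * p <= x < INR (S i) * p.
Proof.
  intros Hp n. induction n as [|n IH]; intros x [H1 H2].
  - simpl in H2. lra.
  - destruct (Rlt_dec x (INR n * p)) as [Hl|Hl].
    + destruct (IH x (conj H1 Hl)) as [i [Hi Hi2]]. exists i. split; [lia|auto].
    + exists n. split; [lia|]. split; lra.
Qed.

Lemma shift_angle (alpha phi : R) : exists phi', alpha <= phi' < alpha + 2 * PI /\
  cos phi' = cos phi /\ sin phi' = sin phi.
Proof.
  assert (HP := PI_RGT_0).
  destruct (INR_archimed (2*PI) (alpha - phi)) as [n Hn]; [lra|].
  set (phi1 := phi + 2 * INR n * PI).
  destruct (INR_archimed (2*PI) (phi1 - alpha)) as [m Hm]; [lra|].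
  destruct (find_slot (2*PI) ltac:(lra) m (phi1 - alpha)) as [i [Hi [Hi1 Hi2]]].
  { split; [unfold phi1; lra|lra]. }
  exists (phi1 - 2 * INR i * PI).
  rewrite S_INR in Hi2.
  split; [split; lra|].
  assert (E1 := cos_period (phi1 - 2 * INR i * PI) i).
  assert (E2 := sin_period (phi1 - 2 * INR i * PI) i).
  replace (phi1 - 2 * INR i * PI + 2 * INR i * PI) with phi1 in E1, E2 by ring.
  unfold phi1 in *. rewrite cos_period in E1. rewrite sin_period in E2. split; congruence.
Qed.

Lemma polar p q : p <> q -> exists phi,
  fst q - fst p = dist p q * cos phi /\ snd q - snd p = dist p q * sin phi.
Proof.
  intros Hpq. assert (Hr := dist_pos p q Hpq).
  set (r := dist p q) in *.
  set (x := fst q - fst p). set (y := snd q - snd p).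
  assert (Er : r * r = x * x + y * y).
  { unfold r, dist. rewrite sqrt_sqrt.
    - unfold x, y; ring.
    - apply Rplus_le_le_0_compat; apply pow2_ge_0. }
  assert (Hb : -1 <= x / r <= 1).
  { split.
    - apply (Rmult_le_reg_r r); [lra|]. unfold Rdiv. rewrite Rmult_assoc, Rinv_l by lra. nra.
    - apply (Rmult_le_reg_r r); [lra|]. unfold Rdiv. rewrite Rmult_assoc, Rinv_l by lra. nra. }
  assert (Es : sin (acos (x / r)) = Rabs y / r).
  { rewrite sin_acos by exact Hb.
    replace (1 - (x / r)²) with ((Rabs y / r)²).
    - apply sqrt_Rsqr. apply Rmult_le_pos; [apply Rabs_pos| left; apply Rinv_0_lt_compat; lra].
    - unfold Rsqr. replace (Rabs y / r * (Rabs y / r)) with ((Rabs y * Rabs y) / (r * r)) by (field; lra).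
      rewrite <- Rabs_mult, Rabs_right by nra. replace (y * y) with (r * r - x * x) by lra. field. lra. }
  assert (Ec : cos (acos (x / r)) = x / r) by (apply cos_acos; exact Hb).
  destruct (Rle_dec 0 y) as [Hy|Hy].
  - exists (acos (x / r)). rewrite Ec, Es, Rabs_right by lra. split; field; lra.
  - exists (- acos (x / r)). rewrite cos_neg, sin_neg, Ec, Es, Rabs_left by lra. split; field; lra.
Qed.

Lemma theta_facts k : (8 < k)%nat ->
  0 < theta k /\ theta k <= PI / 4 /\ INR k * theta k = 2 * PI.
Proof.
  intros Hk. assert (HP := PI_RGT_0).
  assert (Hk9 : 9 <= INR k) by (replace 9 with (INR 9) by (simpl; lra); apply le_INR; lia).
  unfold theta. split; [|split].
  - apply Rdiv_lt_0_compat; lra.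
  - apply (Rmult_le_reg_r (INR k)); [lra|]. unfold Rdiv. rewrite Rmult_assoc, Rinv_l by lra. nra.
  - field. lra.
Qed.

Lemma cone_exists k alpha p q : (8 < k)%nat -> p <> q ->
  exists i, (i < k)%nat /\ in_cone k alpha i p q.
Proof.
  intros Hk Hpq. destruct (theta_facts k Hk) as [Ht1 [Ht2 Ht3]].
  destruct (polar p q Hpq) as [phi [E1 E2]].
  destruct (shift_angle alpha phi) as [phi' [[H1 H2] [C S]]].
  destruct (find_slot (theta k) Ht1 k (phi' - alpha)) as [i [Hi [Hi1 Hi2]]]. { lra. }
  exists i. split; [auto|]. exists (dist p q), phi'. split; [apply dist_pos; auto|].
  split; [split; lra|]. rewrite C, S. auto.
Qed.

Lemma cone_r p q r phi :
  0 < r -> fst q - fst p = r * cos phi -> snd q - snd p = r * sin phi -> dist p q = r.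
Proof.
  intros Hr E1 E2. unfold dist.
  replace ((fst p - fst q) ^ 2 + (snd p - snd q) ^ 2) with (r ^ 2).
  - apply sqrt_pow2. lra.
  - replace (fst p - fst q) with (- (r * cos phi)) by lra.
    replace (snd p - snd q) with (- (r * sin phi)) by lra.
    assert (H := sin2_cos2 phi). unfold Rsqr in H. 
    transitivity (r^2 * (sin phi * sin phi + cos phi * cos phi)); [rewrite H; ring| ring].
Qed.

Lemma cone_unique k alpha p q i j : (8 < k)%nat -> (i < k)%nat -> (j < k)%nat ->
  in_cone k alpha i p q -> in_cone k alpha j p q -> i = j.
Proof.
  intros Hk. destruct (theta_facts k Hk) as [Ht1 [Ht2 Ht3]].
  assert (HP := PI_RGT_0).
  assert (key : forall i j, (i < j)%nat -> (j < k)%nat ->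
    in_cone k alpha i p q -> in_cone k alpha j p q -> False).
  { clear i j. intros i j Hij Hj [r1 [f1 [Hr1 [[A1 A2] [E1 E2]]]]] [r2 [f2 [Hr2 [[B1 B2] [F1 F2]]]]].
    assert (R1 := cone_r p q r1 f1 Hr1 E1 E2).
    assert (R2 := cone_r p q r2 f2 Hr2 F1 F2).
    rewrite <- R1 in E1, E2, Hr1. rewrite <- R2 in F1, F2.
    assert (C : cos f1 = cos f2). { apply (Rmult_eq_reg_l (dist p q)); [rewrite <- E1, <- F1; reflexivity|lra]. }
    assert (Sn : sin f1 = sin f2). { apply (Rmult_eq_reg_l (dist p q)); [rewrite <- E2, <- F2; reflexivity|lra]. }
    assert (Hd1 : 0 < f2 - f1).
    { assert (INR (S i) <= INR j) by (apply le_INR; lia).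
      assert (INR (S i) * theta k <= INR j * theta k) by (apply Rmult_le_compat_r; lra). lra. }
    assert (Hd2 : f2 - f1 < 2 * PI).
    { rewrite S_INR in A2, B2. assert (INR j + 1 <= INR k) by (rewrite <- S_INR; apply le_INR; lia).
      assert (0 <= INR i) by apply pos_INR.
      assert ((INR j + 1) * theta k <= INR k * theta k) by (apply Rmult_le_compat_r; lra).
      assert (0 <= INR i * theta k) by (apply Rmult_le_pos; lra). lra. }
    assert (Cd : cos (f2 - f1) = 1).
    { rewrite cos_minus, <- C, <- Sn. assert (H := sin2_cos2 f1). unfold Rsqr in H. lra. }
    assert (Sd : sin (f2 - f1) = 0).
    { rewrite sin_minus, <- C, <- Sn. ring. }
    destruct (Rtotal_order (f2 - f1) PI) as [L|[L|L]].
    - assert (H := sin_gt_0 _ Hd1 L). lra.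
    - rewrite L, cos_PI in Cd. lra.
    - assert (H := sin_lt_0 _ L Hd2). lra. }
  intros Hi Hj Ci Cj. destruct (Nat.lt_total i j) as [L|[L|L]].
  - exfalso; eauto.
  - auto.
  - exfalso; eauto.
Qed.

Lemma same_cone_trans k alpha p a b c : (8 < k)%nat ->
  same_cone k alpha p a b -> same_cone k alpha p b c -> same_cone k alpha p a c.
Proof.
  intros Hk [i [Hi [A B]]] [j [Hj [B' C]]].
  assert (i = j) by (eapply cone_unique; eauto). subst j.
  exists i. auto.
Qed.

Lemma same_cone_refl k alpha p q : (8 < k)%nat -> p <> q -> same_cone k alpha p q q.
Proof. intros Hk H. destruct (cone_exists k alpha p q Hk H) as [i [Hi C]]. exists i. auto. Qed.

Lemma cone_geom k alpha p a b : (8 < k)%nat ->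
  same_cone k alpha p a b -> dist p a <= dist p b ->
  dist a b <= dist p b - (cos (theta k) - sin (theta k)) * dist p a.
Proof.
  intros Hk [i [Hi [[r1 [f1 [Hr1 [[A1 A2] [E1 E2]]]]] [r2 [f2 [Hr2 [[B1 B2] [F1 F2]]]]]]]] Hle.
  destruct (theta_facts k Hk) as [Ht1 [Ht2 Ht3]]. assert (HP := PI_RGT_0).
  rewrite (cone_r p a r1 f1 Hr1 E1 E2), (cone_r p b r2 f2 Hr2 F1 F2) in *.
  set (th := theta k) in *. rewrite S_INR in A2, B2.
  assert (Hd : Rabs (f1 - f2) < th).
  { apply Rabs_def1; nra. }
  assert (Cd : cos th <= cos (f1 - f2)).
  { replace (cos (f1 - f2)) with (cos (Rabs (f1 - f2))).
    - left. apply cos_decreasing_1; try lra. apply Rabs_pos.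
    - destruct (Rle_dec 0 (f1 - f2)). rewrite Rabs_right; lra. rewrite Rabs_left, cos_neg; lra. }
  set (C := cos th) in *. set (Sn := sin th).
  assert (HS : 0 <= Sn) by (left; apply sin_gt_0; lra).
  assert (HCS : C * C + Sn * Sn = 1) by (assert (H := sin2_cos2 th); unfold Rsqr in H; unfold C, Sn; lra).
  assert (HC1 : C <= 1) by nra.
  assert (HX : (fst a - fst b) ^ 2 + (snd a - snd b) ^ 2 = r1 * r1 + r2 * r2 - 2 * r1 * r2 * cos (f1 - f2)).
  { replace (fst a - fst b) with (r1 * cos f1 - r2 * cos f2) by lra.
    replace (snd a - snd b) with (r1 * sin f1 - r2 * sin f2) by lra.
    rewrite cos_minus. assert (H1 := sin2_cos2 f1). assert (H2 := sin2_cos2 f2). unfold Rsqr in *.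
    transitivity (r1 * r1 * (sin f1 * sin f1 + cos f1 * cos f1) + r2 * r2 * (sin f2 * sin f2 + cos f2 * cos f2)
       - 2 * r1 * r2 * (cos f1 * cos f2 + sin f1 * sin f2)); [ring|]. rewrite H1, H2. ring. }
  unfold dist at 1. rewrite HX.
  assert (HY : 0 <= r2 - (C - Sn) * r1) by nra.
  rewrite <- (sqrt_pow2 _ HY). apply sqrt_le_1_alt.
  assert (0 <= Sn * r1 * (r2 - C * r1)) by (apply Rmult_le_pos; nra).
  assert (r1 * r2 * cos (f1 - f2) >= r1 * r2 * C) by (apply Rle_ge, Rmult_le_compat_l; nra).
  nra.
Qed.

Lemma lex_le_total a b : lex_le a b \/ lex_le b a.
Proof.
  destruct a as [[d1 i1] j1], b as [[d2 i2] j2]. unfold lex_le, lex_lt; simpl.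
  destruct (Rtotal_order d1 d2) as [H|[H|H]]; [left; right; left; auto| subst d2 |right; right; left; auto].
  destruct (Nat.lt_total i1 i2) as [H|[H|H]]; [left; right; right; left; auto| subst i2 |right; right; right; left; auto].
  destruct (Nat.lt_total j1 j2) as [H|[H|H]]; [left; right; right; right; auto| subst j2; left; left; auto |right; right; right; right; auto].
Qed.

Lemma lex_le_trans a b c : lex_le a b -> lex_le b c -> lex_le a c.
Proof.
  destruct a as [[d1 i1] j1], b as [[d2 i2] j2], c as [[d3 i3] j3]. unfold lex_le, lex_lt; simpl.
  intros [H|H] [H'|H'].
  - left. congruence.
  - injection H as -> -> ->. right. auto.
  - injection H' as -> -> ->. right. auto.
  - right. destruct H as [H|[[? H]|[? [? H]]]]; destruct H' as [H'|[[? H']|[? [? H']]]]; subst;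
    first [left; lra | right; left; split; [auto|lia] | right; right; split; [auto|split; [auto|lia]]].
Qed.

Lemma lex_le_fst a b : lex_le a b -> fst (fst a) <= fst (fst b).
Proof.
  destruct a as [[d1 i1] j1], b as [[d2 i2] j2]. unfold lex_le, lex_lt; simpl. simpl.
  intros [H|[H|[[? ?]|[? ?]]]]; [inversion H; lra|lra|lra|lra].
Qed.

Lemma uid_fst ID u v : fst (fst (uid ID u v)) = dist u v.
Proof.
  unfold uid, lex_min, did. destruct (lex_ltb _ _); simpl; auto. apply dist_sym.
Qed.

Lemma uid_le_dist ID u v u' v' : lex_le (uid ID u v) (uid ID u' v') -> dist u v <= dist u' v'.
Proof. intros H. apply lex_le_fst in H. rewrite !uid_fst in H. auto. Qed.

Lemma exists_min (f : point -> eid) (P : point -> Prop) (l : list point) :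
  (exists x, In x l /\ P x) ->
  exists m, In m l /\ P m /\ forall y, In y l -> P y -> lex_le (f m) (f y).
Proof.
  induction l as [|a l IH]; intros [x [Hx Px]]; [destruct Hx|].
  destruct (classic (exists x, In x l /\ P x)) as [Hl|Hl].
  - destruct (IH Hl) as [m [Hm [Pm Hmin]]].
    destruct (classic (P a /\ lex_le (f a) (f m))) as [[Pa Ha]|Ha].
    + exists a. split; [left; auto|]. split; auto. intros y [<-|Hy] Py; [left; auto|].
      eapply lex_le_trans; eauto.
    + exists m. split; [right; auto|]. split; auto. intros y [<-|Hy] Py; auto.
      destruct (lex_le_total (f m) (f a)); auto. exfalso; apply Ha; auto.
  - exists a. destruct Hx as [<-|Hx]; [|exfalso; apply Hl; eauto].
    split; [left; auto|]. split; auto. intros y [<-|Hy] Py; [left; auto|]. exfalso; apply Hl; eauto.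
Qed.

Lemma walk_app E a b c L1 L2 : walk E a b L1 -> walk E b c L2 -> walk E a c (L1 + L2).
Proof.
  intros H1 H2. induction H1.
  - replace (0 + L2) with L2 by ring. auto.
  - replace (dist u w + L + L2) with (dist u w + (L + L2)) by ring. constructor; auto.
Qed.

Lemma filter_len_lt {A} (p q : A -> bool) (l : list A) :
  (forall z, p z = true -> q z = true) ->
  (exists z, In z l /\ p z = false /\ q z = true) ->
  (length (filter p l) < length (filter q l))%nat.
Proof.
  intros Hpq. induction l as [|a l IH]; intros [z [Hz [Pz Qz]]]; [destruct Hz|].
  assert (Hle : forall l, (length (filter p l) <= length (filter q l))%nat).
  { clear -Hpq. intros l0; induction l0 as [|b l0 IH0]; simpl; [lia|].
    destruct (p b) eqn:E; [rewrite (Hpq b E); simpl; lia|]. destruct (q b); simpl; lia. }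
  simpl. destruct Hz as [<-|Hz].
  - rewrite Pz, Qz. simpl. specialize (Hle l). lia.
  - assert (H := IH (ex_intro _ z (conj Hz (conj Pz Qz)))).
    destruct (p a) eqn:E; [rewrite (Hpq a E); simpl; lia|]. destruct (q a); simpl; lia.
Qed.

Section Main.
Variables (k : nat) (lam alpha t : R) (pts : list point) (ID : point -> nat).
Hypothesis Hk : (8 < k)%nat.
Hypothesis Hlam : 0 < lam.
Hypothesis Hciv : civilized lam pts.
Hypothesis Ht1 : 1 <= t * (cos (theta k) - sin (theta k)).
Hypothesis Hc0 : 0 < cos (theta k) - sin (theta k).
Hypothesis Hc1 : cos (theta k) - sin (theta k) < 1.
Hypothesis Hkey : t * (1 - (cos (theta k) - sin (theta k))) + lam * (1 - t * (cos (theta k) - sin (theta k))) <= 0.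

Let YY := yy_edge pts k alpha ID.

Definition cnt (d : R) : nat :=
  length (filter (fun pq : point * point => if Rlt_dec (dist (fst pq) (snd pq)) d then true else false)
    (list_prod pts pts)).

Lemma cnt_lt x y d : In x pts -> In y pts -> dist x y < d -> (cnt (dist x y) < cnt d)%nat.
Proof.
  intros Hx Hy Hd. unfold cnt. apply filter_len_lt.
  - intros [a b]. simpl. destruct (Rlt_dec (dist a b) (dist x y)); [|discriminate].
    destruct (Rlt_dec (dist a b) d); auto. lra.
  - exists (x, y). split; [apply in_prod; auto|]. simpl.
    destruct (Rlt_dec (dist x y) (dist x y)); [lra|]. destruct (Rlt_dec (dist x y) d); [|lra]. auto.
Qed.

Lemma claim n : forall u v, (cnt (dist u v) <= n)%nat -> In u pts -> In v pts -> dist u v <= 1 ->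
  exists L, walk YY u v L /\ L <= t * dist u v.
Proof.
  assert (Ht0 : 0 < t) by nra.
  induction n as [|n IHn]; intros u v Hn Hu Hv H1;
  (destruct (classic (u = v)) as [<-|Huv]; [exists 0; split; [constructor| rewrite dist_self; lra]|]).
  all: set (c := cos (theta k) - sin (theta k)) in *.
  all: destruct (exists_min (uid ID u) (fun w => udg_edge pts u w /\ same_cone k alpha u v w) pts)
    as [w [Hw [[Euw Cuw] Hwmin]]];
    [exists v; split; [auto|split; [repeat split; auto|apply same_cone_refl; auto]]|].
  all: assert (Yuw : yao_edge pts k alpha ID u w) by
    (split; auto; intros w' E' C'; apply Hwmin; [destruct E' as [_ [? _]]; auto|split; auto;
       eapply same_cone_trans; eauto]).
  all: assert (Hab : dist u w <= dist u v) by
    (eapply uid_le_dist; apply Hwmin; auto; split; [repeat split; auto|apply same_cone_refl; auto]).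
  all: destruct Euw as [_ [_ [Huw Hd1]]].
  all: destruct (exists_min (fun x => uid ID x w) (fun x => yao_edge pts k alpha ID x w /\ same_cone k alpha w u x) pts)
    as [x [Hx [[Yxw Cwx] Hxmin]]];
    [exists u; split; [auto|split; [auto|apply same_cone_refl; auto]]|].
  all: assert (YYxw : YY x w).
  all: try (left; split; auto; intros u' Y' C'; apply Hxmin;
      [destruct Y' as [[? _] _]; auto | split; auto; eapply same_cone_trans; eauto]).
  all: assert (Hdx : dist x w <= dist u w) by
    (eapply uid_le_dist; apply Hxmin; auto; split; auto; apply same_cone_refl; auto).
  all: destruct Yxw as [[_ [_ [Hxw _]]] _].
  all: assert (Gx : dist x u <= dist w u - c * dist w x) by
    (apply (cone_geom k alpha); [auto| destruct Cwx as [i [? [? ?]]]; exists i; auto| rewrite !(dist_sym w); auto]).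
  all: assert (Gw : dist w v <= dist u v - c * dist u w) by
    (apply (cone_geom k alpha); [auto| destruct Cuw as [i [? [? ?]]]; exists i; auto| auto]).
  all: assert (Ld : lam <= dist x w) by (apply Hciv; auto).
  all: assert (La : lam <= dist u w) by (apply Hciv; auto).
  all: rewrite (dist_sym x u), (dist_sym w u), (dist_sym w x) in Gx.
  all: assert (0 <= dist u x) by apply dist_nonneg.
  all: assert (0 <= dist w v) by apply dist_nonneg.
  all: assert (Ncx : 0 < c * dist x w) by nra.
  all: assert (Nca : 0 < c * dist u w) by nra.
  -
    assert (cnt (dist u x) < cnt (dist u v))%nat by (apply cnt_lt; auto; lra). lia.
  - destruct (IHn u x) as [L1 [W1 B1]]; [ | auto | auto | lra |].
    { assert (cnt (dist u x) < cnt (dist u v))%nat by (apply cnt_lt; auto; lra). lia. }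
    destruct (IHn w v) as [L2 [W2 B2]]; [ | auto | auto | lra |].
    { assert (cnt (dist w v) < cnt (dist u v))%nat by (apply cnt_lt; auto; lra). lia. }
    exists (L1 + (dist x w + L2)). split.
    + apply walk_app with x; auto. constructor; auto.
    + assert (t * dist u x <= t * (dist u w - c * dist x w)) by (apply Rmult_le_compat_l; lra).
      assert (t * dist w v <= t * (dist u v - c * dist u w)) by (apply Rmult_le_compat_l; lra).
      assert (t * (1 - c) * dist u w <= t * (1 - c) * 1) by (apply Rmult_le_compat_l; nra).
      assert (dist x w * (1 - t * c) <= lam * (1 - t * c)) by (assert (Hq := Rmult_le_compat_neg_l (1 - t * c) lam (dist x w) ltac:(lra) Ld); lra).
      nra.
Qed.

End Main.

Theorem theorem1 (k : nat) (lam : R) (alpha : R) (pts : list point)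
  (ID : point -> nat) (t : R) :
  (8 < k)%nat ->
  0 < lam ->
  cos (theta k) - sin (theta k) > 1 / (lam + 1) ->
  (forall u v, In u pts -> In v pts -> ID u = ID v -> u = v) ->
  civilized lam pts ->
  connected pts ->
  t >= lam / ((lam + 1) * (cos (theta k) - sin (theta k)) - 1) ->
  length_spanner pts (udg_edge pts) (yy_edge pts k alpha ID) t.
Proof.
  intros Hk Hlam Hc HID Hciv Hconn Ht.
  destruct (theta_facts k Hk) as [Th1 [Th2 Th3]]. assert (HP := PI_RGT_0).
  assert (Hs : 0 < sin (theta k)) by (apply sin_gt_0; lra).
  assert (Hcos : cos (theta k) <= 1) by apply COS_bound.
  set (c := cos (theta k) - sin (theta k)) in *.
  assert (Hinv : 0 < 1 / (lam + 1)) by (apply Rdiv_lt_0_compat; lra).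
  assert (Hc0 : 0 < c) by lra.
  assert (Hc1 : c < 1) by (unfold c; lra).
  assert (HD : 1 < (lam + 1) * c).
  { apply (Rmult_lt_compat_l (lam + 1)) in Hc; [|lra].
    replace ((lam + 1) * (1 / (lam + 1))) with 1 in Hc by (field; lra). lra. }
  assert (HtD : lam <= t * ((lam + 1) * c - 1)).
  { apply Rge_le in Ht. apply (Rmult_le_compat_r ((lam + 1) * c - 1)) in Ht; [|lra].
    replace (lam / ((lam + 1) * c - 1) * ((lam + 1) * c - 1)) with lam in Ht by (field; lra). lra. }
  assert (Ht0 : 0 < t) by nra.
  assert (Hkey : t * (1 - c) + lam * (1 - t * c) <= 0) by nra.
  assert (Ht1 : 1 <= t * c) by nra.
  intros u v Hu Hv L HW. revert Hu Hv. induction HW as [u|u w v L E W IH]; intros Hu Hv.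
  - exists 0. split; [constructor|lra].
  - destruct E as [_ [Hw [Huw H1]]].
    destruct (claim k lam alpha t pts ID Hk Hlam Hciv Ht1 Hc0 Hc1 Hkey
      (cnt pts (dist u w)) u w (le_n _) Hu Hw H1) as [L1 [W1 B1]].
    destruct (IH Hw Hv) as [L2 [W2 B2]].
    exists (L1 + L2). split; [eapply walk_app; eauto|]. nra.
Qed.
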